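(* Let $a,b,c,d,e,f,g,q,r,s,t,u,v,w$ be nonzero complex numbers with $a^3=bcdefg$, $w^3=qrstuv$ and $$\max(|q|,|r|,|s|,|t|,|u|,|v|,|w/q|,|w/r|,|w/s|,|w/t|,|w/u|,|w/v|)<1,$$ such that all expressions below are well defined. Then \begin{align*} &\sum_{k=-\infty}^\infty\frac{(1-aw^k)(1-a(w/tu)^k/(ef))(1-fg(uv/w)^k/a)(1-eg(tv/w)^k/a)}{(1-g(v/w)^k/a)(1-efg(tuv/w)^k/a)(1-a(w/u)^k/f)(1-a(w/t)^k/e)}\\ &\quad\times\frac{(b;q)_k(c;r)_k(d;s)_k(e;t)_k(f;u)_k(g;v)_k}{(a/b;w/q)_k(a/c;w/r)_k(a/d;w/s)_k(a/e;w/t)_k(a/f;w/u)_k(a/g;w/v)_k}\\ &\quad\times\Bigg[1-\frac{(1-a(w/rs)^k/(cd))(1-a(w/qs)^k/(bd))(1-a(w/qr)^k/(bc))}{(1-a(w/q)^k/b)(1-a(w/r)^k/c)(1-a(w/s)^k/d)}\\ &\qquad\qquad\times\frac{(1-et^k)(1-fu^k)(1-gv^k)}{(1-fg(uv/w)^k/a)(1-eg(tv/w)^k/a)(1-ef(tu/w)^k/a)}\Bigg]\\ &=\frac{(bw/(aq);w/q)_\infty(cw/(ar);w/r)_\infty(dw/(as);w/s)_\infty(ew/(at);w/t)_\infty(fw/(au);w/u)_\infty(gw/(av);w/v)_\infty}{(q/b;q)_\infty(r/c;r)_\infty(s/d;s)_\infty(t/e;t)_\infty(u/f;u)_\infty(v/g;v)_\infty}\\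 &\quad-\frac{(b;q)_\infty(c;r)_\infty(d;s)_\infty(e;t)_\infty(f;u)_\infty(g;v)_\infty}{(a/b;w/q)_\infty(a/c;w/r)_\infty(a/d;w/s)_\infty(a/e;w/t)_\infty(a/f;w/u)_\infty(a/g;w/v)_\infty}. \end{align*}
   Context: For $|q|<1$ and $x\in\mathbb C$, $(x;q)_\infty=\prod_{j\ge0}(1-xq^j)$, and for any integer $k$, $(x;q)_k=(x;q)_\infty/(xq^k;q)_\infty$ (so $(x;q)_k=\prod_{j=0}^{k-1}(1-xq^j)$ for $k\ge0$). Here e.g. $(w/tu)^k$ means $(w/(tu))^k$. The bilateral sum means $\lim_{m,n\to\infty}\sum_{k=-m}^n$. *)

(* Defs.v *)
From Stdlib Require Import Reals ZArith.
From Coquelicot Require Import Coquelicot.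
Open Scope C_scope.

Fixpoint Cpown (x : C) (n : nat) : C :=
  match n with O => 1 | S n' => x * Cpown x n' end.

Definition Czpow (x : C) (k : Z) : C :=
  match k with
  | Z0 => 1
  | Zpos p => Cpown x (Pos.to_nat p)
  | Zneg p => / Cpown x (Pos.to_nat p)
  end.

Fixpoint qprod_fin (x q : C) (n : nat) : C :=
  match n with O => 1 | S n' => qprod_fin x q n' * (1 - x * Cpown q n') end.

(* (x;q)_oo := lim_{n -> oo} prod_{j<n} (1 - x q^j), the limit being taken
   componentwise (real and imaginary parts); for |q|<1 the product converges. *)
Definition qinf (x q : C) : C :=
  (real (Lim_seq (fun n => Re (qprod_fin x q n))),
   real (Lim_seq (fun n => Im (qprod_fin x q n)))).

(* (x;q)_k := (x;q)_oo / (x q^k; q)_oo for any integer k (as in the paper) *)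
Definition qpoch (x q : C) (k : Z) : C := qinf x q / qinf (x * Czpow q k) q.

Definition qpoch_defined (x q : C) : Prop :=
  forall k : Z, qinf (x * Czpow q k) q <> 0.

Fixpoint sumZ (T : Z -> C) (lo : Z) (len : nat) : C :=
  match len with
  | O => 0
  | S l => sumZ T lo l + T (lo + Z.of_nat l)%Z
  end.

Definition bisum_partial (T : Z -> C) (m n : nat) : C :=
  sumZ T (- Z.of_nat m)%Z (m + n + 1).

Definition bilateral_sum_is (T : Z -> C) (S : C) : Prop :=
  forall eps : R, (0 < eps)%R ->
    exists N : nat, forall m n : nat, (N <= m)%nat -> (N <= n)%nat ->
      (Cmod (bisum_partial T m n - S) < eps)%R.

(* Main.v *)
Require Import Defs.
From Stdlib Require Import Reals ZArith Field Lia Lra Psatz.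
From Coquelicot Require Import Coquelicot.
Open Scope C_scope.
Implicit Types x y z : C.

Lemma Cpown_Cpow x n : Cpown x n = Cpow x n.
Proof. induction n; simpl; congruence. Qed.

Lemma Cmod_1_minus (z : C) : (Cmod (1 - z) <= 1 + Cmod z)%R.
Proof.
  unfold Cminus. eapply Rle_trans; [apply Cmod_triangle|]. rewrite Cmod_opp, Cmod_1. lra.
Qed.

Lemma exp_le_mono (x y : R) : (x <= y)%R -> (exp x <= exp y)%R.
Proof. intros H. destruct (Rle_lt_or_eq_dec _ _ H) as [H'|H']. left; apply exp_increasing; auto. subst; lra. Qed.

Lemma qprod_bound (x y : C) n : (Cmod y < 1)%R ->
  (Cmod (qprod_fin x y n) <= exp (Cmod x * (1 - Cmod y ^ n) / (1 - Cmod y)))%R.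
Proof.
  intros Hy. induction n as [|n IH]; simpl.
  - rewrite Cmod_1. replace (Cmod x * (1 - 1) / (1 - Cmod y))%R with 0%R by (field; lra).
    rewrite exp_0; lra.
  - rewrite Cmod_mult.
    replace (Cmod x * (1 - Cmod y * Cmod y ^ n) / (1 - Cmod y))%R
      with (Cmod x * (1 - Cmod y ^ n) / (1 - Cmod y) + Cmod x * Cmod y ^ n)%R by (field; lra).
    rewrite exp_plus.
    apply Rmult_le_compat; try apply Cmod_ge_0; auto.
    eapply Rle_trans; [apply Cmod_1_minus|].
    rewrite Cmod_mult, Cpown_Cpow, Cmod_pow. apply exp_ineq1_le.
Qed.

Lemma qprod_bound2 (x y : C) n : (Cmod y < 1)%R ->
  (Cmod (qprod_fin x y n) <= exp (Cmod x / (1 - Cmod y)))%R.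
Proof.
  intros Hy. eapply Rle_trans; [apply qprod_bound; auto|]. apply exp_le_mono.
  unfold Rdiv. apply Rmult_le_compat_r. apply Rlt_le, Rinv_0_lt_compat; lra.
  assert (0 <= Cmod y ^ n)%R by (apply pow_le, Cmod_ge_0).
  pose proof (Cmod_ge_0 x). nra.
Qed.

Lemma qprod_cauchy (x y : C) n i : (Cmod y < 1)%R ->
  (Cmod (qprod_fin x y (n + i) - qprod_fin x y n) <=
   exp (Cmod x / (1 - Cmod y)) * Cmod x / (1 - Cmod y) * (Cmod y ^ n - Cmod y ^ (n + i)))%R.
Proof.
  intros Hy. set (M := exp (Cmod x / (1 - Cmod y))).
  induction i as [|i IH].
  - rewrite Nat.add_0_r. replace (qprod_fin x y n - qprod_fin x y n) with (RtoC 0) by ring.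
    rewrite Cmod_0. replace (Cmod y ^ n - Cmod y ^ n)%R with 0%R by ring. lra.
  - rewrite Nat.add_succ_r. simpl qprod_fin.
    replace (qprod_fin x y (n + i) * (1 - x * Cpown y (n + i)) - qprod_fin x y n)
      with ((qprod_fin x y (n + i) - qprod_fin x y n) + - (qprod_fin x y (n + i) * (x * Cpown y (n + i))))
      by ring.
    eapply Rle_trans; [apply Cmod_triangle|].
    rewrite Cmod_opp, !Cmod_mult, Cpown_Cpow, Cmod_pow.
    assert (HB := qprod_bound2 x y (n + i) Hy). fold M in HB.
    assert (0 <= Cmod x * Cmod y ^ (n + i))%R by (apply Rmult_le_pos; [apply Cmod_ge_0| apply pow_le, Cmod_ge_0]).
    replace (M * Cmod x / (1 - Cmod y) * (Cmod y ^ n - Cmod y ^ S (n + i)))%R with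
      (M * Cmod x / (1 - Cmod y) * (Cmod y ^ n - Cmod y ^ (n + i)) + M * (Cmod x * Cmod y ^ (n + i)))%R
      by (simpl; field; lra).
    apply Rplus_le_compat; auto.
    apply Rmult_le_compat_r; auto.
Qed.

Definition Ccv (u : nat -> C) (l : C) : Prop :=
  is_lim_seq (fun n => Re (u n)) (Re l) /\ is_lim_seq (fun n => Im (u n)) (Im l).

Lemma Re_minus (a b : C) : Re (a - b) = (Re a - Re b)%R.
Proof. reflexivity. Qed.
Lemma Im_minus (a b : C) : Im (a - b) = (Im a - Im b)%R.
Proof. reflexivity. Qed.

Lemma im_le_Cmod (c : C) : (Rabs (Im c) <= Cmod c)%R.
Proof.
  destruct c as [x y]. unfold Cmod, Im; simpl.
  rewrite <- sqrt_Rsqr_abs. apply sqrt_le_1_alt. unfold Rsqr. nra.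
Qed.

Lemma cauchy_of_C (u : nat -> C) (K : R) (y : R) :
  (0 <= K)%R -> (Rabs y < 1)%R ->
  (forall n i, Cmod (u (n + i)%nat - u n) <= K * Rabs (y ^ n))%R ->
  ex_lim_seq_cauchy (fun n => Re (u n)) /\ ex_lim_seq_cauchy (fun n => Im (u n)).
Proof.
  intros HK Hy H.
  assert (Hc : forall eps : posreal, exists N, forall n m, (N <= n)%nat -> (N <= m)%nat ->
     (Cmod (u n - u m) < eps)%R).
  { intros eps. destruct (pow_lt_1_zero y Hy (eps / (K + 1))) as [N HN].
    { apply Rdiv_lt_0_compat. apply cond_pos. lra. }
    exists N. intros n m Hn Hm.
    assert (Hgen : forall n m, (N <= n)%nat -> (n <= m)%nat -> (Cmod (u m - u n) < eps)%R).
    { clear n m Hn Hm. intros n m Hn Hnm.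
      replace m with (n + (m - n))%nat by lia.
      eapply Rle_lt_trans; [apply H|].
      assert (Ht := HN n Hn).
      assert (Hep := cond_pos eps).
      apply Rle_lt_trans with (K * (eps / (K + 1)))%R.
      apply Rmult_le_compat_l; lra.
      replace (K * (eps / (K + 1)))%R with (eps * (K / (K+1)))%R by (field; lra).
      assert (K / (K+1) < 1)%R. { apply (Rmult_lt_reg_r (K+1)). lra. field_simplify; lra. }
      nra. }
    destruct (Nat.le_ge_cases n m).
    - replace (u n - u m) with (- (u m - u n)) by ring. rewrite Cmod_opp. apply Hgen; auto.
    - apply Hgen; auto. }
  split; intros eps; destruct (Hc eps) as [N HN]; exists N; intros n m Hn Hm;
    (eapply Rle_lt_trans; [|apply (HN n m Hn Hm)]).
  - rewrite <- Re_minus. apply re_le_Cmod.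
  - rewrite <- Im_minus. apply im_le_Cmod.
Qed.

Lemma lim_of_cauchy (u : nat -> R) :
  ex_lim_seq_cauchy u -> is_lim_seq u (real (Lim_seq u)).
Proof.
  intros H. apply ex_lim_seq_cauchy_corr in H. destruct H as [l Hl].
  rewrite (is_lim_seq_unique _ _ Hl). simpl. exact Hl.
Qed.

Lemma qprod_cv (x y : C) : (Cmod y < 1)%R -> Ccv (qprod_fin x y) (qinf x y).
Proof.
  intros Hy.
  set (K := (exp (Cmod x / (1 - Cmod y)) * Cmod x / (1 - Cmod y))%R).
  assert (HK : (0 <= K)%R).
  { unfold K. unfold Rdiv. apply Rmult_le_pos. apply Rmult_le_pos.
    left; apply exp_pos. apply Cmod_ge_0. left; apply Rinv_0_lt_compat; lra. }
  assert (Hy' : (Rabs (Cmod y) < 1)%R) by (rewrite Rabs_pos_eq; auto; apply Cmod_ge_0).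
  destruct (cauchy_of_C (qprod_fin x y) K (Cmod y) HK Hy') as [H1 H2].
  { intros n i. eapply Rle_trans; [apply qprod_cauchy; auto|]. fold K.
    rewrite Rabs_pos_eq by (apply pow_le, Cmod_ge_0).
    apply Rmult_le_compat_l; auto.
    assert (0 <= Cmod y ^ (n+i))%R by (apply pow_le, Cmod_ge_0). lra. }
  split; unfold qinf; simpl; apply lim_of_cauchy; auto.
Qed.

Lemma Ccv_ext u v l : (forall n, u n = v n) -> Ccv u l -> Ccv v l.
Proof.
  intros E [H1 H2]. split; eapply is_lim_seq_ext; try eassumption; intros n; simpl; rewrite E; auto.
Qed.

Lemma Ccv_const (c : C) : Ccv (fun _ => c) c.
Proof. split; apply is_lim_seq_const. Qed.

Lemma Ccv_mult u v l1 l2 : Ccv u l1 -> Ccv v l2 -> Ccv (fun n => u n * v n) (l1 * l2).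
Proof.
  intros [A1 A2] [B1 B2]. split; simpl.
  - apply is_lim_seq_minus'; apply is_lim_seq_mult'; auto.
  - apply is_lim_seq_plus'; apply is_lim_seq_mult'; auto.
Qed.

Lemma is_lim_seq_sq (f : nat -> R) (l : R) : is_lim_seq f l -> is_lim_seq (fun n => f n ^ 2)%R (l ^ 2)%R.
Proof.
  intros H. replace (l ^ 2)%R with (l * l)%R by ring.
  apply is_lim_seq_ext with (fun n => f n * f n)%R. intros; ring.
  apply is_lim_seq_mult'; auto.
Qed.

Lemma Ccv_inv u l : Ccv u l -> l <> 0 -> Ccv (fun n => / u n) (/ l).
Proof.
  intros [A1 A2] Hl.
  assert (Hd : (fst l ^ 2 + snd l ^ 2 <> 0)%R).
  { intros E. apply Hl. destruct l as [a b]. simpl in E.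
    assert (a = 0%R) by nra. assert (b = 0%R) by nra. subst. reflexivity. }
  assert (D : is_lim_seq (fun n => fst (u n) ^ 2 + snd (u n) ^ 2)%R (fst l ^ 2 + snd l ^ 2)%R).
  { apply is_lim_seq_plus'; apply is_lim_seq_sq; auto. }
  split; simpl.
  - apply is_lim_seq_div'; auto.
  - apply is_lim_seq_div'; auto. apply (is_lim_seq_opp _ (Finite (snd l))). auto.
Qed.

Lemma Ccv_div u v l1 l2 : Ccv u l1 -> Ccv v l2 -> l2 <> 0 -> Ccv (fun n => u n / v n) (l1 / l2).
Proof. intros. apply Ccv_mult; auto. apply Ccv_inv; auto. Qed.

Lemma Ccv_unique u l1 l2 : Ccv u l1 -> Ccv u l2 -> l1 = l2.
Proof.
  intros [A1 A2] [B1 B2].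
  apply is_lim_seq_unique in A1, A2, B1, B2.
  destruct l1 as [a b], l2 as [c d]. simpl in *.
  rewrite A1 in B1. rewrite A2 in B2. injection B1; injection B2; intros; subst; auto.
Qed.

Lemma Ccv_S u l : Ccv u l -> Ccv (fun n => u (S n)) l.
Proof. intros [A B]; split; apply (is_lim_seq_incr_1 (fun n => Re (u n))) || apply (is_lim_seq_incr_1 (fun n => Im (u n))); auto. Qed.

Lemma Cmod_le_sum (z : C) : (Cmod z <= Rabs (Re z) + Rabs (Im z))%R.
Proof.
  destruct z as [x y]. unfold Cmod, Re, Im; simpl.
  rewrite <- (sqrt_Rsqr (Rabs x + Rabs y)) by (pose proof (Rabs_pos x); pose proof (Rabs_pos y); lra).
  apply sqrt_le_1_alt. unfold Rsqr.
  pose proof (Rabs_pos x); pose proof (Rabs_pos y).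
  assert (x * x = Rabs x * Rabs x)%R by (rewrite <- Rabs_mult; rewrite Rabs_pos_eq; nra).
  assert (y * y = Rabs y * Rabs y)%R by (rewrite <- Rabs_mult; rewrite Rabs_pos_eq; nra).
  nra.
Qed.

Lemma Ccv_eps u l : Ccv u l -> forall eps, (0 < eps)%R -> exists N, forall n, (N <= n)%nat -> (Cmod (u n - l) < eps)%R.
Proof.
  intros [A B] eps He.
  apply is_lim_seq_spec in A, B.
  destruct (A (mkposreal (eps/2) ltac:(lra))) as [N1 H1].
  destruct (B (mkposreal (eps/2) ltac:(lra))) as [N2 H2].
  exists (N1 + N2)%nat. intros n Hn.
  eapply Rle_lt_trans; [apply Cmod_le_sum|].
  rewrite Re_minus, Im_minus.
  assert (X1 := H1 n ltac:(lia)). assert (X2 := H2 n ltac:(lia)). simpl in X1, X2. lra.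
Qed.

Lemma qprod_shift x y n : qprod_fin x y (S n) = (1 - x) * qprod_fin (x*y) y n.
Proof.
  induction n as [|n IH].
  - simpl. ring.
  - change (qprod_fin x y (S (S n))) with (qprod_fin x y (S n) * (1 - x * Cpown y (S n))).
    rewrite IH. simpl. ring.
Qed.

Lemma qinf_shift x y : (Cmod y < 1)%R -> qinf x y = (1 - x) * qinf (x*y) y.
Proof.
  intros Hy. apply (Ccv_unique (fun n => qprod_fin x y (S n))).
  - apply Ccv_S, qprod_cv; auto.
  - apply Ccv_ext with (fun n => (1 - x) * qprod_fin (x*y) y n).
    intros n; rewrite qprod_shift; auto.
    apply Ccv_mult. apply Ccv_const. apply qprod_cv; auto.
Qed.

Lemma qinf_iter x y n : (Cmod y < 1)%R -> qinf x y = qprod_fin x y n * qinf (x * Cpown y n) y.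
Proof.
  intros Hy. induction n as [|n IH].
  - simpl. rewrite Cmult_1_r. ring.
  - rewrite IH. rewrite (qinf_shift (x * Cpown y n)) by auto.
    replace (x * Cpown y n * y) with (x * Cpown y (S n)) by (simpl; ring).
    simpl. ring.
Qed.

Lemma Cinv_nz (z : C) : z <> 0 -> / z <> 0.
Proof. intros H E. apply C1_nz. rewrite <- (Cinv_r z H), E. ring. Qed.

Lemma Cpown_nz y n : y <> 0 -> Cpown y n <> 0.
Proof. intros H. induction n as [|n IH]; simpl. apply C1_nz. apply Cmult_neq_0. exact H. exact IH. Qed.

Lemma Cpown_mult x y n : Cpown (x * y) n = Cpown x n * Cpown y n.
Proof. induction n; simpl. ring. rewrite IHn; ring. Qed.

Lemma Cpown_inv x n : x <> 0 -> Cpown (/ x) n = / Cpown x n.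
Proof.
  intros H. induction n; simpl. field. rewrite IHn. field. split; auto. apply Cpown_nz; auto.
Qed.

Lemma Czpow_nat y n : Czpow y (Z.of_nat n) = Cpown y n.
Proof.
  destruct n. reflexivity. simpl. rewrite SuccNat2Pos.id_succ. reflexivity.
Qed.

Lemma Czpow_negnat y n : Czpow y (- Z.of_nat n) = / Cpown y n.
Proof.
  destruct n. simpl. field. simpl. rewrite SuccNat2Pos.id_succ. reflexivity.
Qed.

Lemma Z_cases (k : Z) : exists n, k = Z.of_nat n \/ k = (- Z.of_nat (S n))%Z.
Proof.
  destruct (Z.le_gt_cases 0 k).
  - exists (Z.to_nat k). left. rewrite Z2Nat.id; auto.
  - exists (Z.to_nat (- k) - 1)%nat. right. lia.
Qed.

Lemma Czpow_nz y k : y <> 0 -> Czpow y k <> 0.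
Proof.
  intros H. destruct (Z_cases k) as [n [-> | ->]].
  - rewrite Czpow_nat. apply Cpown_nz; auto.
  - rewrite Czpow_negnat. apply Cinv_nz, Cpown_nz; auto.
Qed.

Lemma Czpow_succ y k : y <> 0 -> Czpow y (k + 1) = Czpow y k * y.
Proof.
  intros H. destruct (Z_cases k) as [n [-> | ->]].
  - replace (Z.of_nat n + 1)%Z with (Z.of_nat (S n)) by lia.
    rewrite !Czpow_nat. simpl. ring.
  - replace (- Z.of_nat (S n) + 1)%Z with (- Z.of_nat n)%Z by lia.
    rewrite !Czpow_negnat. simpl. field. split; auto. apply Cpown_nz; auto.
Qed.

Lemma Czpow_mult x y k : x <> 0 -> y <> 0 -> Czpow (x * y) k = Czpow x k * Czpow y k.
Proof.
  intros Hx Hy. destruct (Z_cases k) as [n [-> | ->]].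
  - rewrite !Czpow_nat. apply Cpown_mult.
  - rewrite !Czpow_negnat. rewrite Cpown_mult. field.
    split; apply Cpown_nz; auto.
Qed.

Lemma Czpow_inv x k : x <> 0 -> Czpow (/ x) k = / Czpow x k.
Proof.
  intros Hx. destruct (Z_cases k) as [n [-> | ->]].
  - rewrite !Czpow_nat. apply Cpown_inv; auto.
  - rewrite !Czpow_negnat. rewrite Cpown_inv; auto.

Qed.

Lemma Czpow_div x y k : x <> 0 -> y <> 0 -> Czpow (x / y) k = Czpow x k / Czpow y k.
Proof.
  intros Hx Hy. unfold Cdiv. rewrite Czpow_mult, Czpow_inv; auto. apply Cinv_nz; auto.
Qed.
Ltac nzf H K :=
  let HX := fresh in
  match goal with |- ?X <> _ => match type of H with ?Y <> _ =>
    intro HX; apply H; replace Y with (X*K) by (field; repeat split; auto; repeat apply Cmult_neq_0; auto);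
    rewrite HX; ring end end.
Lemma key (al be ga de ep ph et : C) :
  al <> 0 -> be <> 0 -> ga <> 0 -> de <> 0 -> ep <> 0 -> ph <> 0 -> et <> 0 ->
  1 - et/al <> 0 -> 1 - ep*ph*et/al <> 0 -> 1 - al/ph <> 0 -> 1 - al/ep <> 0 ->
  1 - al/be <> 0 -> 1 - al/ga <> 0 -> 1 - al/de <> 0 ->
  1 - ph*et/al <> 0 -> 1 - ep*et/al <> 0 -> 1 - ep*ph/al <> 0 ->
  al*al*al = be*ga*de*ep*ph*et ->
  (1-al)*(1-al/(ep*ph))*(1-ph*et/al)*(1-ep*et/al)/((1-et/al)*(1-ep*ph*et/al)*(1-al/ph)*(1-al/ep))
  * (1 - (1-al/(ga*de))*(1-al/(be*de))*(1-al/(be*ga))/((1-al/be)*(1-al/ga)*(1-al/de))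
       * ((1-ep)*(1-ph)*(1-et)/((1-ph*et/al)*(1-ep*et/al)*(1-ep*ph/al))))
  = 1 - (1-be)*(1-ga)*(1-de)*(1-ep)*(1-ph)*(1-et)/((1-al/be)*(1-al/ga)*(1-al/de)*(1-al/ep)*(1-al/ph)*(1-al/et)).
Proof.
  intros Ha Hb Hc Hd He Hf Hg H1 H2 H3 H4 H5 H6 H7 H8 H9 H10 Hc3.
  assert (Het : et = al*al*al/(be*ga*de*ep*ph)) by (rewrite Hc3; field; repeat split; auto).
  rewrite Het in H1, H2, H8, H9 |- *.
  assert (HP: be*ga*de*ep*ph <> 0) by (repeat apply Cmult_neq_0; auto).
  assert (HQ: be*ga*de <> 0) by (repeat apply Cmult_neq_0; auto).
  field.
  repeat split; auto. all: idtac.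
  - nzf H1 (- / (be*ga*de*ep*ph)).
  - nzf H3 (/ph).
  - nzf H4 (/ep).
  - nzf H7 (/de).
  - nzf H6 (/ga).
  - nzf H5 (/be).
  - nzf H10 (/al).
  - nzf H9 (/(be*ga*de*ph)).
  - nzf H8 (/(be*ga*de*ep)).
  - nzf H2 (/(be*ga*de)).
  - nzf H1 (/(be*ga*de*ep*ph)).
Qed.

Lemma key' (al be ga de ep ph et A2 A3 A4 A5 A6 A7 A8 B1 B2 B3 B4 B5 B6 C4 E1 E2 E3 E4 E5 E6 : C) :
  al <> 0 -> be <> 0 -> ga <> 0 -> de <> 0 -> ep <> 0 -> ph <> 0 -> et <> 0 ->
  al*al*al = be*ga*de*ep*ph*et ->
  A2 = al/(ep*ph) -> A3 = ph*et/al -> A4 = ep*et/al -> A5 = et/al -> A6 = ep*ph*et/al ->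
  A7 = al/ph -> A8 = al/ep -> B1 = al/(ga*de) -> B2 = al/(be*de) -> B3 = al/(be*ga) ->
  B4 = al/be -> B5 = al/ga -> B6 = al/de -> C4 = ep*ph/al ->
  E1 = al/be -> E2 = al/ga -> E3 = al/de -> E4 = al/ep -> E5 = al/ph -> E6 = al/et ->
  1 - A5 <> 0 -> 1 - A6 <> 0 -> 1 - A7 <> 0 -> 1 - A8 <> 0 ->
  1 - B4 <> 0 -> 1 - B5 <> 0 -> 1 - B6 <> 0 -> 1 - A3 <> 0 -> 1 - A4 <> 0 -> 1 - C4 <> 0 ->
  (1-al)*(1-A2)*(1-A3)*(1-A4)/((1-A5)*(1-A6)*(1-A7)*(1-A8))
  * (1 - (1-B1)*(1-B2)*(1-B3)/((1-B4)*(1-B5)*(1-B6))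
       * ((1-ep)*(1-ph)*(1-et)/((1-A3)*(1-A4)*(1-C4))))
  = 1 - (1-be)*(1-ga)*(1-de)*(1-ep)*(1-ph)*(1-et)/((1-E1)*(1-E2)*(1-E3)*(1-E4)*(1-E5)*(1-E6)).
Proof.
  intros. subst. apply key; auto.
Qed.

Lemma qpoch_succ x y k : y <> 0 -> (Cmod y < 1)%R ->
  qinf (x * Czpow y k) y <> 0 -> qinf (x * Czpow y (k+1)) y <> 0 ->
  qpoch x y (k+1) = qpoch x y k * (1 - x * Czpow y k).
Proof.
  intros Hy0 Hy H1 H2. unfold qpoch.
  rewrite (qinf_shift (x * Czpow y k)) in H1 |- * by auto.
  rewrite Czpow_succ by auto. rewrite Czpow_succ in H2 by auto.
  replace (x * Czpow y k * y) with (x * (Czpow y k * y)) in * by ring.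
  assert (1 - x * Czpow y k <> 0) by (intro E; apply H1; rewrite E; ring).
  field. auto.
Qed.

Lemma qpoch_pos x y n : (Cmod y < 1)%R -> qinf x y <> 0 ->
  qpoch x y (Z.of_nat n) = qprod_fin x y n.
Proof.
  intros Hy H. unfold qpoch. rewrite Czpow_nat.
  rewrite (qinf_iter x y n Hy) in H |- *.
  assert (qinf (x * Cpown y n) y <> 0) by (intro E; apply H; rewrite E; ring).
  field. auto.
Qed.

Fixpoint tri y (m : nat) : C :=
  match m with O => 1 | S m' => tri y m' * Cpown y (S m') end.

Lemma tri_mult x y m : tri (x * y) m = tri x m * tri y m.
Proof. induction m; simpl. ring. rewrite IHm, Cpown_mult. simpl. ring. Qed.

Lemma tri_nz y m : y <> 0 -> tri y m <> 0.
Proof. intros H. induction m; simpl. apply C1_nz. apply Cmult_neq_0; auto. apply Cpown_nz with (n := S m); auto. Qed.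

Lemma Lrel x y m : x <> 0 -> y <> 0 ->
  qprod_fin (x * / Cpown y m) y m * tri y m = Cpown (-x) m * qprod_fin (y/x) y m.
Proof.
  intros Hx Hy. induction m as [|m IH].
  - simpl. ring.
  - rewrite qprod_shift.
    replace (x * / Cpown y (S m) * y) with (x * / Cpown y m)
      by (simpl; field; split; auto; apply Cpown_nz; auto).
    change (tri y (S m)) with (tri y m * Cpown y (S m)).
    replace ((1 - x * / Cpown y (S m)) * qprod_fin (x * / Cpown y m) y m * (tri y m * Cpown y (S m)))
      with ((Cpown y (S m) - x) * (qprod_fin (x * / Cpown y m) y m * tri y m))
      by (field; apply Cpown_nz; auto).
    rewrite IH. simpl. field. auto.
Qed.

Lemma qpoch_neg x y n : x <> 0 -> y <> 0 -> (Cmod y < 1)%R -> qinf x y <> 0 ->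
  qinf (x * Czpow y (- Z.of_nat n)) y <> 0 ->
  qpoch x y (- Z.of_nat n) = tri y n / (Cpown (-x) n * qprod_fin (y/x) y n).
Proof.
  intros Hx Hy0 Hy H H'. unfold qpoch. rewrite Czpow_negnat in H' |- *.
  rewrite (qinf_iter (x * / Cpown y n) y n Hy) in H' |- *.
  replace (x * / Cpown y n * Cpown y n) with x in * by (field; apply Cpown_nz; auto).
  assert (Hq : qprod_fin (x * / Cpown y n) y n <> 0) by (intro E; apply H'; rewrite E; ring).
  assert (HL := Lrel x y n Hx Hy0).
  assert (Hq2 : Cpown (-x) n * qprod_fin (y/x) y n <> 0).
  { rewrite <- HL. apply Cmult_neq_0; auto. apply tri_nz; auto. }
  rewrite <- HL. field. split; auto. apply tri_nz; auto.
Qed.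

Lemma qprod_neg_nz x y n : x <> 0 -> y <> 0 -> (Cmod y < 1)%R ->
  qinf (x * Czpow y (- Z.of_nat n)) y <> 0 -> qprod_fin (y/x) y n <> 0.
Proof.
  intros Hx Hy0 Hy H'. rewrite Czpow_negnat in H'.
  rewrite (qinf_iter (x * / Cpown y n) y n Hy) in H'.
  assert (Hq : qprod_fin (x * / Cpown y n) y n <> 0) by (intro E; apply H'; rewrite E; ring).
  assert (HL := Lrel x y n Hx Hy0).
  intro E. rewrite E in HL. apply Hq.
  assert (tri y n <> 0) by (apply tri_nz; auto).
  apply (Cmult_integral _ _) in HL || idtac.
  replace (qprod_fin (x * / Cpown y n) y n) with (qprod_fin (x * / Cpown y n) y n * tri y n / tri y n) by (field; auto).
  rewrite HL. field. auto.
Qed.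

Lemma Copp_nz x : x <> 0 -> - x <> 0.
Proof. intros H E. apply H. replace x with (- - x) by ring. rewrite E. ring. Qed.

Ltac nzt := unfold Cdiv; repeat (apply Cmult_neq_0 || apply Cinv_nz || apply Czpow_nz || apply Copp_nz || apply Cpown_nz || apply tri_nz); auto.

Ltac split_nz H := lazymatch type of H with
 | ?x * ?y <> _ => let H1 := fresh "Hn" in let H2 := fresh "Hn" in
     assert (H1 : x <> 0) by (let E := fresh in intro E; apply H; rewrite E; ring);
     assert (H2 : y <> 0) by (let E := fresh in intro E; apply H; rewrite E; ring);
     split_nz H1; split_nz H2
 | _ => idtac end.

Lemma sumZ_tele (T P : Z -> C) lo len : (forall k, T k = P k - P (k+1)%Z) ->
  sumZ T lo len = P lo - P (lo + Z.of_nat len)%Z.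
Proof.
  intros H. induction len as [|l IH]; simpl.
  - rewrite Z.add_0_r. ring.
  - rewrite IH, H. replace (lo + Z.of_nat l + 1)%Z with (lo + Z.of_nat (S l))%Z by lia.
    replace (lo + Z.pos (Pos.of_succ_nat l))%Z with (lo + Z.of_nat (S l))%Z by reflexivity. ring.
Qed.

Lemma qinf_def0 x y : (forall k, qinf (x * Czpow y k) y <> 0) -> qinf x y <> 0.
Proof. intros H. specialize (H 0%Z). simpl in H. rewrite Cmult_1_r in H. exact H. Qed.

Definition Pk (a b c d e f g q r s t u v w : C) (k : Z) : C :=
  qpoch b q k * qpoch c r k * qpoch d s k
          * qpoch e t k * qpoch f u k * qpoch g v k
          / (qpoch (a / b) (w / q) k * qpoch (a / c) (w / r) k * qpoch (a / d) (w / s) k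
             * qpoch (a / e) (w / t) k * qpoch (a / f) (w / u) k * qpoch (a / g) (w / v) k).

Theorem mainTheorem4 (a b c d e f g q r s t u v w : C) :
  a <> 0 -> b <> 0 -> c <> 0 -> d <> 0 -> e <> 0 -> f <> 0 -> g <> 0 ->
  q <> 0 -> r <> 0 -> s <> 0 -> t <> 0 -> u <> 0 -> v <> 0 -> w <> 0 ->
  a * a * a = b * c * d * e * f * g ->
  w * w * w = q * r * s * t * u * v ->
  (Cmod q < 1)%R -> (Cmod r < 1)%R -> (Cmod s < 1)%R ->
  (Cmod t < 1)%R -> (Cmod u < 1)%R -> (Cmod v < 1)%R ->
  (Cmod (w / q) < 1)%R -> (Cmod (w / r) < 1)%R -> (Cmod (w / s) < 1)%R ->
  (Cmod (w / t) < 1)%R -> (Cmod (w / u) < 1)%R -> (Cmod (w / v) < 1)%R ->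
  (* well-definedness of the summand: all denominators are nonzero *)
  (forall k : Z,
     1 - g * Czpow (v / w) k / a <> 0 /\
     1 - e * f * g * Czpow (t * u * v / w) k / a <> 0 /\
     1 - a * Czpow (w / u) k / f <> 0 /\
     1 - a * Czpow (w / t) k / e <> 0 /\
     1 - a * Czpow (w / q) k / b <> 0 /\
     1 - a * Czpow (w / r) k / c <> 0 /\
     1 - a * Czpow (w / s) k / d <> 0 /\
     1 - f * g * Czpow (u * v / w) k / a <> 0 /\
     1 - e * g * Czpow (t * v / w) k / a <> 0 /\
     1 - e * f * Czpow (t * u / w) k / a <> 0 /\
     qpoch (a / b) (w / q) k * qpoch (a / c) (w / r) k * qpoch (a / d) (w / s) k
     * qpoch (a / e) (w / t) k * qpoch (a / f) (w / u) k * qpoch (a / g) (w / v) k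
       <> 0) ->
  qpoch_defined b q -> qpoch_defined c r -> qpoch_defined d s ->
  qpoch_defined e t -> qpoch_defined f u -> qpoch_defined g v ->
  qpoch_defined (a / b) (w / q) -> qpoch_defined (a / c) (w / r) ->
  qpoch_defined (a / d) (w / s) -> qpoch_defined (a / e) (w / t) ->
  qpoch_defined (a / f) (w / u) -> qpoch_defined (a / g) (w / v) ->
  (* well-definedness of the right-hand side *)
  qinf (q / b) q * qinf (r / c) r * qinf (s / d) s
    * qinf (t / e) t * qinf (u / f) u * qinf (v / g) v <> 0 ->
  qinf (a / b) (w / q) * qinf (a / c) (w / r) * qinf (a / d) (w / s)
    * qinf (a / e) (w / t) * qinf (a / f) (w / u) * qinf (a / g) (w / v) <> 0 ->
  bilateral_sum_is
    (fun k : Z =>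
       (1 - a * Czpow w k) * (1 - a * Czpow (w / (t * u)) k / (e * f))
       * (1 - f * g * Czpow (u * v / w) k / a) * (1 - e * g * Czpow (t * v / w) k / a)
       / ((1 - g * Czpow (v / w) k / a) * (1 - e * f * g * Czpow (t * u * v / w) k / a)
          * (1 - a * Czpow (w / u) k / f) * (1 - a * Czpow (w / t) k / e))
       * (qpoch b q k * qpoch c r k * qpoch d s k
          * qpoch e t k * qpoch f u k * qpoch g v k
          / (qpoch (a / b) (w / q) k * qpoch (a / c) (w / r) k * qpoch (a / d) (w / s) k
             * qpoch (a / e) (w / t) k * qpoch (a / f) (w / u) k * qpoch (a / g) (w / v) k))
       * (1 -
          (1 - a * Czpow (w / (r * s)) k / (c * d)) * (1 - a * Czpow (w / (q * s)) k / (b * d))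
          * (1 - a * Czpow (w / (q * r)) k / (b * c))
          / ((1 - a * Czpow (w / q) k / b) * (1 - a * Czpow (w / r) k / c)
             * (1 - a * Czpow (w / s) k / d))
          * ((1 - e * Czpow t k) * (1 - f * Czpow u k) * (1 - g * Czpow v k)
             / ((1 - f * g * Czpow (u * v / w) k / a) * (1 - e * g * Czpow (t * v / w) k / a)
                * (1 - e * f * Czpow (t * u / w) k / a)))))
    (qinf (b * w / (a * q)) (w / q) * qinf (c * w / (a * r)) (w / r)
     * qinf (d * w / (a * s)) (w / s) * qinf (e * w / (a * t)) (w / t)
     * qinf (f * w / (a * u)) (w / u) * qinf (g * w / (a * v)) (w / v)
     / (qinf (q / b) q * qinf (r / c) r * qinf (s / d) s
        * qinf (t / e) t * qinf (u / f) u * qinf (v / g) v)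
     - qinf b q * qinf c r * qinf d s * qinf e t * qinf f u * qinf g v
       / (qinf (a / b) (w / q) * qinf (a / c) (w / r) * qinf (a / d) (w / s)
          * qinf (a / e) (w / t) * qinf (a / f) (w / u) * qinf (a / g) (w / v))).
Proof.
  intros Ha Hb Hc Hd He Hf Hg Hq Hr Hs Ht Hu Hv Hw Ha3 Hw3 Mq Mr Ms Mt Mu Mv Mwq Mwr Mws Mwt Mwu Mwv
    Hwd Dbq Dcr Dds Det Dfu Dgv Dab Dac Dad Dae Daf Dag HR1 HR2.
  unfold qpoch_defined in *.
  assert (Nwq : w / q <> 0) by nzt. assert (Nwr : w / r <> 0) by nzt.
  assert (Nws : w / s <> 0) by nzt. assert (Nwt : w / t <> 0) by nzt.
  assert (Nwu : w / u <> 0) by nzt. assert (Nwv : w / v <> 0) by nzt.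
  assert (Nab : a / b <> 0) by nzt. assert (Nac : a / c <> 0) by nzt.
  assert (Nad : a / d <> 0) by nzt. assert (Nae : a / e <> 0) by nzt.
  assert (Naf : a / f <> 0) by nzt. assert (Nag : a / g <> 0) by nzt.
  set (P := Pk a b c d e f g q r s t u v w).
  match goal with |- bilateral_sum_is ?T ?S => set (TT := T); set (SS := S) end.
  assert (HW3 : forall k, Czpow w k * Czpow w k * Czpow w k
     = Czpow q k * Czpow r k * Czpow s k * Czpow t k * Czpow u k * Czpow v k).
  { intro k. rewrite <- !Czpow_mult by nzt. rewrite Hw3. reflexivity. }
  assert (HT : forall k, TT k = P k - P (k+1)%Z).
  { intro k. unfold TT, P, Pk.
    destruct (Hwd k) as (W1 & W2 & W3 & W4 & W5 & W6 & W7 & W8 & W9 & W10 & W11).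
    destruct (Hwd (k+1)%Z) as (_ & _ & _ & _ & _ & _ & _ & _ & _ & _ & W11').
    rewrite (qpoch_succ b q k) by auto.
    rewrite (qpoch_succ c r k) by auto.
    rewrite (qpoch_succ d s k) by auto.
    rewrite (qpoch_succ e t k) by auto.
    rewrite (qpoch_succ f u k) by auto.
    rewrite (qpoch_succ g v k) by auto.
    rewrite (qpoch_succ (a/b) (w/q) k) in W11' |- * by auto.
    rewrite (qpoch_succ (a/c) (w/r) k) in W11' |- * by auto.
    rewrite (qpoch_succ (a/d) (w/s) k) in W11' |- * by auto.
    rewrite (qpoch_succ (a/e) (w/t) k) in W11' |- * by auto.
    rewrite (qpoch_succ (a/f) (w/u) k) in W11' |- * by auto.
    rewrite (qpoch_succ (a/g) (w/v) k) in W11' |- * by auto.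
    split_nz W11'.
    pose proof (key' (a*Czpow w k) (b*Czpow q k) (c*Czpow r k) (d*Czpow s k) (e*Czpow t k)
      (f*Czpow u k) (g*Czpow v k)
      (a * Czpow (w / (t * u)) k / (e * f))
      (f * g * Czpow (u * v / w) k / a)
      (e * g * Czpow (t * v / w) k / a)
      (g * Czpow (v / w) k / a)
      (e * f * g * Czpow (t * u * v / w) k / a)
      (a * Czpow (w / u) k / f) (a * Czpow (w / t) k / e)
      (a * Czpow (w / (r * s)) k / (c * d)) (a * Czpow (w / (q * s)) k / (b * d))
      (a * Czpow (w / (q * r)) k / (b * c))
      (a * Czpow (w / q) k / b) (a * Czpow (w / r) k / c) (a * Czpow (w / s) k / d)
      (e * f * Czpow (t * u / w) k / a)
      (a / b * Czpow (w / q) k) (a / c * Czpow (w / r) k) (a / d * Czpow (w / s) k)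
      (a / e * Czpow (w / t) k) (a / f * Czpow (w / u) k) (a / g * Czpow (w / v) k)) as K.
    specialize (K ltac:(nzt) ltac:(nzt) ltac:(nzt) ltac:(nzt) ltac:(nzt) ltac:(nzt) ltac:(nzt)).
    specialize (K ltac:(transitivity (a*a*a*(Czpow w k * Czpow w k * Czpow w k)); [ring|];
                        rewrite Ha3, HW3; ring)).
    do 21 (try (let H := fresh in match type of K with ?A -> _ =>
       assert (H : A) by ((rewrite ?Czpow_div, ?Czpow_mult by nzt); field; repeat split; nzt);
       specialize (K H); clear H end)).
    specialize (K W1 W2 W3 W4 W5 W6 W7 W8 W9 W10).
    match goal with |- ?PRE * (?N / ?D) * ?BR = _ => transitivity (N / D * (PRE * BR)); [ring|] end.
    rewrite K.
    field. repeat split; auto.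
    all: match goal with |- ?g0 - ?a0 * ?Z <> _ => let E := fresh in intro E;
      match goal with H : ?one - a0 / g0 * Z <> _ |- _ => apply H;
        replace (one - a0/g0*Z) with ((g0 - a0*Z) / g0) by (field; auto); rewrite E; unfold Cdiv; ring end end. }
  assert (HB : forall m n, bisum_partial TT m n = P (- Z.of_nat m)%Z - P (Z.of_nat (S n))).
  { intros m n. unfold bisum_partial. rewrite (sumZ_tele TT P) by exact HT.
    replace (- Z.of_nat m + Z.of_nat (m + n + 1))%Z with (Z.of_nat (S n)) by lia. reflexivity. }
  assert (L2 : Ccv (fun n => P (Z.of_nat n))
    (qinf b q * qinf c r * qinf d s * qinf e t * qinf f u * qinf g v
       / (qinf (a / b) (w / q) * qinf (a / c) (w / r) * qinf (a / d) (w / s)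
          * qinf (a / e) (w / t) * qinf (a / f) (w / u) * qinf (a / g) (w / v)))).
  { apply Ccv_ext with (fun n => (qprod_fin b q n * qprod_fin c r n * qprod_fin d s n
        * qprod_fin e t n * qprod_fin f u n * qprod_fin g v n)
       / (qprod_fin (a / b) (w / q) n * qprod_fin (a / c) (w / r) n * qprod_fin (a / d) (w / s) n
        * qprod_fin (a / e) (w / t) n * qprod_fin (a / f) (w / u) n * qprod_fin (a / g) (w / v) n)).
    { intro n. unfold P, Pk.
      rewrite !qpoch_pos by first [assumption | apply qinf_def0; assumption]. reflexivity. }
    apply Ccv_div; [repeat apply Ccv_mult; apply qprod_cv; auto
                   |repeat apply Ccv_mult; apply qprod_cv; auto| exact HR2]. }
  assert (L1 : Ccv (fun m => P (- Z.of_nat m)%Z)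
    (qinf (b * w / (a * q)) (w / q) * qinf (c * w / (a * r)) (w / r)
     * qinf (d * w / (a * s)) (w / s) * qinf (e * w / (a * t)) (w / t)
     * qinf (f * w / (a * u)) (w / u) * qinf (g * w / (a * v)) (w / v)
     / (qinf (q / b) q * qinf (r / c) r * qinf (s / d) s
        * qinf (t / e) t * qinf (u / f) u * qinf (v / g) v))).
  { replace (b * w / (a * q)) with ((w / q) / (a / b)) by (field; auto).
    replace (c * w / (a * r)) with ((w / r) / (a / c)) by (field; auto).
    replace (d * w / (a * s)) with ((w / s) / (a / d)) by (field; auto).
    replace (e * w / (a * t)) with ((w / t) / (a / e)) by (field; auto).
    replace (f * w / (a * u)) with ((w / u) / (a / f)) by (field; auto).
    replace (g * w / (a * v)) with ((w / v) / (a / g)) by (field; auto).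
    apply Ccv_ext with (fun m => (qprod_fin ((w / q) / (a / b)) (w / q) m
        * qprod_fin ((w / r) / (a / c)) (w / r) m * qprod_fin ((w / s) / (a / d)) (w / s) m
        * qprod_fin ((w / t) / (a / e)) (w / t) m * qprod_fin ((w / u) / (a / f)) (w / u) m
        * qprod_fin ((w / v) / (a / g)) (w / v) m)
       / (qprod_fin (q / b) q m * qprod_fin (r / c) r m * qprod_fin (s / d) s m
        * qprod_fin (t / e) t m * qprod_fin (u / f) u m * qprod_fin (v / g) v m)).
    2: { apply Ccv_div; [repeat apply Ccv_mult; apply qprod_cv; auto
                   |repeat apply Ccv_mult; apply qprod_cv; auto| exact HR1]. }
    intro m. unfold P, Pk.
    assert (Lb := qprod_neg_nz b q m Hb Hq Mq (Dbq _)).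
    assert (Lc := qprod_neg_nz c r m Hc Hr Mr (Dcr _)).
    assert (Ld := qprod_neg_nz d s m Hd Hs Ms (Dds _)).
    assert (Le := qprod_neg_nz e t m He Ht Mt (Det _)).
    assert (Lf := qprod_neg_nz f u m Hf Hu Mu (Dfu _)).
    assert (Lg := qprod_neg_nz g v m Hg Hv Mv (Dgv _)).
    assert (Mb := qprod_neg_nz (a/b) (w/q) m Nab Nwq Mwq (Dab _)).
    assert (Mc := qprod_neg_nz (a/c) (w/r) m Nac Nwr Mwr (Dac _)).
    assert (Md := qprod_neg_nz (a/d) (w/s) m Nad Nws Mws (Dad _)).
    assert (Me := qprod_neg_nz (a/e) (w/t) m Nae Nwt Mwt (Dae _)).
    assert (Mf := qprod_neg_nz (a/f) (w/u) m Naf Nwu Mwu (Daf _)).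
    assert (Mg := qprod_neg_nz (a/g) (w/v) m Nag Nwv Mwv (Dag _)).
    rewrite !qpoch_neg by first [assumption | apply qinf_def0; assumption | auto].
    assert (E1 : tri q m * tri r m * tri s m * tri t m * tri u m * tri v m
       = tri (w/q) m * tri (w/r) m * tri (w/s) m * tri (w/t) m * tri (w/u) m * tri (w/v) m).
    { rewrite <- !tri_mult. f_equal.
      transitivity (w*w*w*(w*w*w)/(q*r*s*t*u*v)).
      - rewrite Hw3. field. repeat split; auto.
      - field. repeat split; auto. }
    assert (E2 : Cpown (-b) m * Cpown (-c) m * Cpown (-d) m * Cpown (-e) m * Cpown (-f) m * Cpown (-g) m
       = Cpown (-(a/b)) m * Cpown (-(a/c)) m * Cpown (-(a/d)) m * Cpown (-(a/e)) m
         * Cpown (-(a/f)) m * Cpown (-(a/g)) m).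
    { rewrite <- !Cpown_mult. f_equal.
      transitivity (a*a*a*(a*a*a)/(b*c*d*e*f*g)).
      - rewrite Ha3. field. repeat split; auto.
      - field. repeat split; auto. }
    symmetry.
    transitivity ((tri q m * tri r m * tri s m * tri t m * tri u m * tri v m)
       * (Cpown (-(a/b)) m * Cpown (-(a/c)) m * Cpown (-(a/d)) m * Cpown (-(a/e)) m
         * Cpown (-(a/f)) m * Cpown (-(a/g)) m)
       / ((tri (w/q) m * tri (w/r) m * tri (w/s) m * tri (w/t) m * tri (w/u) m * tri (w/v) m)
          * (Cpown (-b) m * Cpown (-c) m * Cpown (-d) m * Cpown (-e) m * Cpown (-f) m * Cpown (-g) m))
       * ((qprod_fin ((w / q) / (a / b)) (w / q) m
        * qprod_fin ((w / r) / (a / c)) (w / r) m * qprod_fin ((w / s) / (a / d)) (w / s) m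
        * qprod_fin ((w / t) / (a / e)) (w / t) m * qprod_fin ((w / u) / (a / f)) (w / u) m
        * qprod_fin ((w / v) / (a / g)) (w / v) m)
       / (qprod_fin (q / b) q m * qprod_fin (r / c) r m * qprod_fin (s / d) s m
        * qprod_fin (t / e) t m * qprod_fin (u / f) u m * qprod_fin (v / g) v m))).
    - field. repeat split; nzt.
    - rewrite E1, E2. field. repeat split; nzt. }
  unfold bilateral_sum_is. intros eps Heps.
  destruct (Ccv_eps _ _ L1 (eps/2)%R) as [N1 H1]; [lra|].
  destruct (Ccv_eps _ _ (Ccv_S _ _ L2) (eps/2)%R) as [N2 H2]; [lra|].
  exists (N1 + N2)%nat. intros m n Hm Hn. rewrite HB.
  specialize (H1 m ltac:(lia)). specialize (H2 n ltac:(lia)). cbv beta in H1, H2.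
  unfold SS.
  match goal with |- context [Cmod (?X - ?Y - (?R1 - ?R2))] =>
    replace (X - Y - (R1 - R2)) with ((X - R1) + - (Y - R2)) by ring end.
  eapply Rle_lt_trans; [apply Cmod_triangle|]. rewrite Cmod_opp. lra.
Qed.
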